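(* Let $\Gamma$ be a set of clauses with designated blocking variables. If $C\lor\ell$ is cost-BC with respect to $\Gamma$ and the literal $\ell$, then $\mathrm{cost}(\Gamma)=\mathrm{cost}(\Gamma\cup\{C\lor\ell\})$.
   Context: For a CNF $\Gamma$ with designated blocking variables $b_1,\dots,b_m$: for a total assignment $\alpha$, $\mathrm{cost}(\alpha)=\sum_i\alpha(b_i)$, and $\mathrm{cost}(\Gamma)=\min\{\mathrm{cost}(\alpha):\alpha\text{ total},\ \alpha\models\Gamma\}$. A clause $C\lor\ell$ is cost-BC w.r.t. $\Gamma$ and the literal $\ell$ if for every clause of the form $D\lor\lnot\ell$ in $\Gamma$, $C\lor D$ is a tautology, and $\ell$ is not a blocking variable with positive polarity. *)

(* Defs.v *)
From mathcomp Require Import all_boot.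
Set Implicit Arguments. Unset Strict Implicit. Unset Printing Implicit Defensive.

Section CNF.
Variable V : finType.

(* A literal is a variable with a polarity (true = positive). *)
Definition lit := (V * bool)%type.
Definition negl (l : lit) : lit := (l.1, ~~ l.2).
Definition clause := seq lit.
Definition cnf := seq clause.

Definition assignment := {ffun V -> bool}.
Definition lit_val (a : assignment) (l : lit) : bool := a l.1 == l.2.
Definition sat_clause (a : assignment) (c : clause) : bool := has (lit_val a) c.
Definition sat (a : assignment) (G : cnf) : bool := all (sat_clause a) G.

Definition cost_asg (B : {set V}) (a : assignment) : nat :=
  \sum_(b in B) nat_of_bool (a b).

(* cost(Gamma) = min over satisfying total assignments; None = +infinity
   (Gamma unsatisfiable, min of the empty set). *)
Definition cost (B : {set V}) (G : cnf) : option nat :=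
  if [pick a : assignment | sat a G] is Some a0 then
    Some (\big[minn/cost_asg B a0]_(a : assignment | sat a G) cost_asg B a)
  else None.

Definition tautology (c : clause) : bool := has (fun l => negl l \in c) c.

Definition cost_BC (B : {set V}) (G : cnf) (C : clause) (l : lit) : Prop :=
  (forall E, E \in G -> negl l \in E ->
     tautology (C ++ filter (fun x => x != negl l) E)) /\
  ~ (l.1 \in B /\ l.2 = true).
End CNF.

(* Main.v *)
Require Import Defs.
From mathcomp Require Import all_boot.

Section Aux.
Variable V : finType.
Variable B : {set V}.

Lemma bigmin_le (I : eqType) (r : seq I) (P : pred I) (F : I -> nat) x a :
  a \in r -> P a -> \big[minn/x]_(i <- r | P i) F i <= F a.
Proof.
elim: r => // i r IH; rewrite inE big_cons => /predU1P [->|ar] Pa.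
  by rewrite Pa; exact: geq_minl.
case: ifP => _; last exact: IH.
exact: leq_trans (geq_minr _ _) (IH ar Pa).
Qed.

Lemma cost_spec (G : cnf V) :
  match cost B G with
  | Some m => (exists2 a, sat a G & cost_asg B a = m) /\
              forall a, sat a G -> m <= cost_asg B a
  | None => forall a, ~~ sat a G
  end.
Proof.
rewrite /cost; case: pickP => [a0 Ha0|H]; last by move=> a; rewrite H.
split.
  apply: (big_ind (fun m => exists2 a, sat a G & cost_asg B a = m)).
  - by exists a0.
  - move=> x y [ax Hx <-] [ay Hy <-].
    by case: (leqP (cost_asg B ax) (cost_asg B ay)) => h;
      [exists ax => //; apply/minn_idPl | exists ay => //; apply/minn_idPr; apply: ltnW].
  - by move=> a Ha; exists a.
move=> a Ha; exact: bigmin_le (mem_index_enum a) Ha.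
Qed.
End Aux.

Theorem proposition3p5 (V : finType) (B : {set V}) (G : cnf V) (C : clause V)
    (l : lit V) :
  cost_BC B G C l -> cost B G = cost B ((l :: C) :: G).
Proof.
move=> [HE Hl].
pose fl (a : assignment V) : assignment V :=
  [ffun v => if v == l.1 then l.2 else a v].
have key : forall a, sat a G -> exists2 a', sat a' ((l :: C) :: G) &
    cost_asg B a' <= cost_asg B a.
  move=> a Ha.
  case Hc: (sat_clause a (l :: C)).
    by exists a => //; apply/andP; split; [exact: Hc|].
  exists (fl a).
    rewrite /sat /= /sat_clause /= /lit_val ffunE eqxx eqxx /=.
    apply/allP => E HEG.
    have HaE : sat_clause a E by move/allP: Ha; apply.
    case: (boolP (negl l \in E)) => Hn.
      have Ht := HE E HEG Hn.
      have [y Hy Hya] : exists2 y, y \in E & (y != negl l) && lit_val a y.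
        move: Ht => /hasP [x Hx Hnx].
        have Cfalse : forall z, z \in C -> ~~ lit_val a z.
          move=> z Hz; apply/negP => Hz'; move/negP: Hc; apply.
          by rewrite /sat_clause /= ; apply/orP; right; apply/hasP; exists z.
        case Hxa: (lit_val a x).
          have : x \notin C by apply/negP => /Cfalse; rewrite Hxa.
          move=> HxC; move: Hx; rewrite mem_cat (negbTE HxC) /= mem_filter.
          by case/andP => h1 h2; exists x => //; rewrite h1 Hxa.
        have Hnxa : lit_val a (negl x).
          by move: Hxa; rewrite /lit_val /negl /=; case: (a x.1); case: x.2.
        have : negl x \notin C by apply/negP => /Cfalse; rewrite Hnxa.
        move=> HxC; move: Hnx; rewrite mem_cat (negbTE HxC) /= mem_filter.
        by case/andP => h1 h2; exists (negl x) => //; rewrite h1 Hnxa.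
      apply/hasP; exists y => //.
      move/andP: Hya => [Hyn Hya].
      rewrite /lit_val ffunE; case: (y.1 =P l.1) => Hv; last by move: Hya; rewrite /lit_val.
      apply/eqP; move: Hyn; rewrite /negl; case: y Hv {Hy Hya} => y1 y2 /= Hv; subst y1.
      by rewrite xpair_eqE eqxx /=; case: (l.2); case: y2.
    case: (boolP (l \in E)) => Hl'.
      by apply/hasP; exists l => //; rewrite /lit_val ffunE eqxx.
    move/hasP: HaE => [y Hy Hya]; apply/hasP; exists y => //.
    rewrite /lit_val ffunE; case: (y.1 =P l.1) => Hv //.
    exfalso; case: y Hv Hy Hya => y1 y2 /= -> Hy _.
    have Hlp : l = (l.1, l.2) by case: (l).
    rewrite Hlp in Hl'; move: Hy Hn Hl'; rewrite /negl.
    by case: (l.2); case: y2 => -> //.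
  rewrite /cost_asg; apply: leq_sum => b Hb; rewrite ffunE.
  case: eqP => // Hv; subst b.
  by case E2: l.2 => //; exfalso; apply: Hl.
have hG := @cost_spec _ B G; have hG2 := @cost_spec _ B ((l :: C) :: G).
have sub : forall a, sat a ((l :: C) :: G) -> sat a G by move=> a /andP [].
move: hG hG2.
case: (cost B G) => [m|]; case: (cost B _) => [m'|] //.
- move=> [[a Ha <-] Hm] [[a' Ha' <-] Hm'].
  congr Some; apply/eqP; rewrite eqn_leq Hm ?sub //.
  have [a2 Ha2 Hle] := key a Ha; exact: leq_trans (Hm' _ Ha2) Hle.
- move=> [[a Ha _] _] H; have [a2 Ha2 _] := key a Ha.
  by move: (H a2); rewrite Ha2.
- by move=> H [[a Ha _] _]; move: (H a); rewrite sub.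
Qed.
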